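(* Let $\psi,\phi\in \mathbf{\Psi}_n$, and set $m:=\min_{t\in\Omega_n}\frac{\psi(t)}{\phi(t)}$, $M:=\max_{t\in\Omega_n}\frac{\psi(t)}{\phi(t)}$, $m^*:=\min_{s\in\Omega_n}\frac{\psi^*(s)}{\phi^*(s)}$, $M^*:=\max_{s\in\Omega_n}\frac{\psi^*(s)}{\phi^*(s)}$. Then: (i) $\frac{1}{n}\le m\le \frac{\psi(t)}{\phi(t)} \le M\le n$ for all $t\in\Omega_n$; (ii) $\frac{1}{n}\le m^*\le \frac{\psi^*(t)}{\phi^*(t)}\le M^*\le n$ for all $t\in\Omega_n$; (iii) $m\cdot M^*= M\cdot m^*=1$; (iv) $m\cdot|\!|\!|\cdot|\!|\!|_{\phi}\le|\!|\!|\cdot|\!|\!|_{\psi}\le M\cdot|\!|\!|\cdot|\!|\!|_{\phi}$; (v) $\frac{1}{M}\cdot|\!|\!|\cdot|\!|\!|_{\phi^*}\le|\!|\!|\cdot|\!|\!|_{\psi^*}\le\frac{1}{m}\cdot|\!|\!|\cdot|\!|\!|_{\phi^*}$; (vi) $\psi\ge\phi$ if and only if $\psi^*\le\phi^*$; (vii) $\psi\le\phi$ if and only if $\psi^*\ge\phi^*$.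
   Context: Let $(X,\|\cdot\|)$ be a normed vector space, $n\ge2$. $\Omega_n:=\{t\in\mathbb{R}^n\mid t_i\ge0,\ \sum_i t_i=1\}$, $\Omega_n^\circ:=\{t\in\Omega_n\mid t_i<1\ \forall i\}$. $\mathbf{\Psi}_n$ is the class of convex continuous $\psi:\Omega_n\to\mathbb{R}$ with (B1) $\psi(\mathbf{e}_i)=1$ for all standard unit vectors $\mathbf{e}_i$ and (B2) $\psi(t)\ge(1-t_i)\psi\big(\frac{t_1}{1-t_i},\ldots,\frac{t_{i-1}}{1-t_i},0,\frac{t_{i+1}}{1-t_i},\ldots,\frac{t_n}{1-t_i}\big)$ for all $t\in\Omega_n^\circ$, $i=1,\ldots,n$. For $\psi\in\mathbf{\Psi}_n$, the dual function is $\psi^*(s):=\max_{t\in\Omega_n}\frac{\langle t,s\rangle}{\psi(t)}$, $s\in\Omega_n$. The norm $|\!|\!|\cdot|\!|\!|_\psi$ on $X^n$ is $|\!|\!|x|\!|\!|_\psi:=\big(\sum_{i}\|x_i\|\big)\,\psi\big(\frac{\|x_1\|}{\sum_{i}\|x_i\|},\ldots,\frac{\|x_n\|}{\sum_{i}\|x_i\|}\big)$ for $x\ne0$, $|\!|\!|0|\!|\!|_\psi:=0$; $|\!|\!|\cdot|\!|\!|_{\psi^*}$ denotes its dual norm on $(X^n)^*\cong(X^* )^n$, which equals the analogous construction with $\psi^*$ and the dual norm on $X^*$. Inequalities $\psi\ge\phi$ etc. are pointwise on $\Omega_n$. *)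

(* Defs.v *)
From HB Require Import structures.
From mathcomp Require Import all_boot all_order all_algebra.
From mathcomp Require Import all_classical all_reals all_analysis.
Set Implicit Arguments. Unset Strict Implicit. Unset Printing Implicit Defensive.
Import Order.TTheory GRing.Theory Num.Theory.
Import numFieldNormedType.Exports.
Local Open Scope classical_set_scope.
Local Open Scope ring_scope.

Section Defs.
Variable R : realType.

Definition Omega (n : nat) (t : 'rV[R]_n) : Prop :=
  (forall i, 0 <= t ord0 i) /\ \sum_i t ord0 i = 1.
Arguments Omega : clear implicits.

Definition Omega_int (n : nat) (t : 'rV[R]_n) : Prop :=
  Omega n t /\ forall i, t ord0 i < 1.
Arguments Omega_int : clear implicits.

Definition unitv (n : nat) (i : 'I_n) : 'rV[R]_n := \row_j (j == i)%:R.

Definition drop_coord (n : nat) (t : 'rV[R]_n) (i : 'I_n) : 'rV[R]_n :=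
  \row_j (if j == i then 0 else t ord0 j / (1 - t ord0 i)).

Definition PsiClass (n : nat) (psi : 'rV[R]_n -> R) : Prop :=
  (forall t s, Omega n t -> Omega n s -> forall l : R, 0 <= l <= 1 ->
     psi (l *: t + (1 - l) *: s) <= l * psi t + (1 - l) * psi s) /\
  {within Omega n, continuous psi} /\
  (forall i, psi (unitv i) = 1) /\
  (forall t, Omega_int n t -> forall i,
     psi t >= (1 - t ord0 i) * psi (drop_coord t i)).

Definition dotv (n : nat) (t s : 'rV[R]_n) : R := \sum_i t ord0 i * s ord0 i.

(* dual function: psi^*(s) = max_{t in Omega_n} <t,s>/psi(t) (the max is attained,
   so it equals the supremum) *)
Definition dualfun (n : nat) (psi : 'rV[R]_n -> R) (s : 'rV[R]_n) : R :=
  sup [set dotv t s / psi t | t in Omega n].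

(* min and max of ratios over Omega_n (attained, hence = inf / sup) *)
Definition ratio_min (n : nat) (psi phi : 'rV[R]_n -> R) : R :=
  inf [set psi t / phi t | t in Omega n].
Definition ratio_max (n : nat) (psi phi : 'rV[R]_n -> R) : R :=
  sup [set psi t / phi t | t in Omega n].

Definition psinorm (X : normedModType R) (n : nat) (psi : 'rV[R]_n -> R)
  (x : 'I_n -> X) : R :=
  let S := \sum_i `|x i| in
  if S == 0 then 0 else S * psi (\row_i (`|x i| / S)).

(* a continuous linear functional on X^n, given as (f_1,...,f_n) with f_i in X^*,
   acting by x |-> sum_i f_i(x_i) *)
Definition cont_lin_family (X : normedModType R) (n : nat) (f : 'I_n -> X -> R)
  : Prop :=
  forall i, (forall (a : R) (x y : X), f i (a *: x + y) = a * f i x + f i y)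
            /\ continuous (f i).

Definition dualnorm (X : normedModType R) (n : nat) (psi : 'rV[R]_n -> R)
  (f : 'I_n -> X -> R) : R :=
  sup [set `|\sum_i f i (x i)| | x in [set x : 'I_n -> X | psinorm psi x <= 1]].

End Defs.
Arguments Omega {R} n t.
Arguments Omega_int {R} n t.

(* Main.v *)
Require Import Defs.
From HB Require Import structures.
From mathcomp Require Import all_boot all_order all_algebra.
From mathcomp Require Import all_classical all_reals all_analysis.
From mathcomp Require Import ring lra.
Import Order.TTheory GRing.Theory Num.Theory.
Import numFieldNormedType.Exports.
Local Open Scope classical_set_scope.
Local Open Scope ring_scope.
Set Implicit Arguments. Unset Strict Implicit. Unset Printing Implicit Defensive.
Section Hom.
Variable R : realType.
Variable n : nat.
Implicit Types x y t s : 'rV[R]_n.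

Definition nonneg x := forall i, 0 <= x ord0 i.
Definition ssum x := \sum_i x ord0 i.

Lemma ssum_ge0 x : nonneg x -> 0 <= ssum x.
Proof. by move=> h; apply: sumr_ge0 => i _; apply: h. Qed.

Lemma ssum0_eq0 x : nonneg x -> ssum x = 0 -> x = 0.
Proof.
move=> h s0; apply/rowP => j; rewrite mxE.
exact: (@psumr_eq0P R _ predT (fun i => x ord0 i) (fun i _ => h i) s0 j isT).
Qed.

Lemma ssumD x y : ssum (x + y) = ssum x + ssum y.
Proof. by rewrite /ssum -big_split; apply: eq_bigr => i _; rewrite mxE. Qed.

Lemma ssumZ c x : ssum (c *: x) = c * ssum x.
Proof. by rewrite /ssum mulr_sumr; apply: eq_bigr => i _; rewrite mxE. Qed.

Lemma nonnegZ c x : 0 <= c -> nonneg x -> nonneg (c *: x).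
Proof. by move=> hc hx i; rewrite mxE mulr_ge0. Qed.

Lemma nonnegD x y : nonneg x -> nonneg y -> nonneg (x + y).
Proof. by move=> hx hy i; rewrite mxE addr_ge0. Qed.

Lemma omega_normalize x : nonneg x -> ssum x != 0 -> Omega n ((ssum x)^-1 *: x).
Proof.
move=> h s0; split.
  by move=> i; rewrite mxE mulr_ge0 // invr_ge0 ssum_ge0.
by have := ssumZ (ssum x)^-1 x; rewrite /ssum => ->; rewrite mulVf.
Qed.

Lemma omega_nonneg t : Omega n t -> nonneg t.
Proof. by case. Qed.

Lemma omega_ssum t : Omega n t -> ssum t = 1.
Proof. by case. Qed.

Variable psi : 'rV[R]_n -> R.
Hypothesis Hpsi : PsiClass psi.

Definition hom x := if ssum x == 0 then 0 else ssum x * psi ((ssum x)^-1 *: x).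

Lemma hom_omega t : Omega n t -> hom t = psi t.
Proof.
move=> ht; rewrite /hom omega_ssum // oner_eq0 invr1 scale1r mul1r //.
Qed.

Lemma hom0 : hom 0 = 0.
Proof. by rewrite /hom (_ : ssum 0 = 0) ?eqxx // /ssum big1 // => i _; rewrite mxE. Qed.

Lemma homZ c x : 0 <= c -> hom (c *: x) = c * hom x.
Proof.
move=> hc; rewrite /hom ssumZ.
have [->|c0] := eqVneq c 0; first by rewrite mul0r eqxx mul0r.
rewrite mulf_eq0 (negbTE c0) /=.
case: eqP => [_|s0]; first by rewrite mulr0.
rewrite scalerA (_ : (c * ssum x)^-1 * c = (ssum x)^-1) ?mulrA //.
by field; apply/andP; split => //; apply/eqP.
Qed.

Lemma homD x y : nonneg x -> nonneg y -> hom (x + y) <= hom x + hom y.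
Proof.
move=> hx hy.
have [sx0|sx0] := eqVneq (ssum x) 0.
  by rewrite (ssum0_eq0 hx sx0) add0r hom0 add0r.
have [sy0|sy0] := eqVneq (ssum y) 0.
  by rewrite (ssum0_eq0 hy sy0) addr0 hom0 addr0.
have gx : 0 < ssum x by rewrite lt_def sx0 ssum_ge0.
have gy : 0 < ssum y by rewrite lt_def sy0 ssum_ge0.
have sxy : ssum (x + y) != 0 by rewrite ssumD; apply/lt0r_neq0; rewrite addr_gt0.
rewrite /hom (negbTE sxy) (negbTE sx0) (negbTE sy0).
set l := ssum x / (ssum x + ssum y).
have hl : 0 <= l <= 1.
  apply/andP; split; first by rewrite /l divr_ge0 ?addr_ge0 ?ltW.
  by rewrite /l ler_pdivrMr ?addr_gt0 // mul1r lerDl ltW.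
have [hconv _] := Hpsi.
have := hconv _ _ (omega_normalize hx sx0) (omega_normalize hy sy0) l hl.
have -> : l *: ((ssum x)^-1 *: x) + (1 - l) *: ((ssum y)^-1 *: y) =
          (ssum (x + y))^-1 *: (x + y).
  apply/rowP => j; rewrite !mxE ssumD /l.
  field.
  by rewrite gt_eqF ?addr_gt0 // lt0r_neq0 // gt_eqF.
move=> H.
rewrite ssumD.
have e : ssum x + ssum y > 0 by rewrite addr_gt0.
rewrite -(ler_pM2l e) in H.
rewrite ssumD in H; apply: (le_trans H); rewrite le_eqVlt; apply/orP; left; apply/eqP; rewrite /l.
by field; rewrite gt_eqF.
Qed.

Definition zero_at x i := \row_j (if j == i then 0 else x ord0 j).
Definition set_at x i u := \row_j (if j == i then u else x ord0 j).

Lemma omega_le1 t i : Omega n t -> t ord0 i <= 1.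
Proof.
move=> [h1 h2]; rewrite -h2 (bigD1 i) //= lerDl.
by apply: sumr_ge0 => j _; apply: h1.
Qed.

Lemma omega_unitv i : Omega n (@unitv R n i).
Proof.
split; first by move=> j; rewrite mxE ler0n.
rewrite (bigD1 i) //= big1 ?mxE ?eqxx ?addr0 // => j hj.
by rewrite mxE (negbTE hj).
Qed.

Lemma omega_one t i : Omega n t -> t ord0 i = 1 -> t = (@unitv R n i).
Proof.
move=> [h1 h2] ti; apply/rowP => j; rewrite !mxE.
have hs : \sum_(j | j != i) t ord0 j = 0.
  by move: h2; rewrite (bigD1 i) //= ti => h; lra.
case: eqP => [->|/eqP ne]; first exact: ti.
exact: (@psumr_eq0P R _ (fun j => j != i) (fun j => t ord0 j) (fun j _ => h1 j) hs j ne).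
Qed.

Lemma hom_unitv i : hom (@unitv R n i) = 1.
Proof. rewrite hom_omega; last exact: omega_unitv. by case: Hpsi => _ [_ [h _]]; apply: h. Qed.

Lemma hom_zero_omega t i : Omega n t -> hom (zero_at t i) <= psi t.
Proof.
move=> ht.
case: (boolP [exists j, t ord0 j == 1]) => [/existsP [j /eqP tj]|hno].
  have tu := omega_one ht tj.
  have [ji|ji] := eqVneq j i.
    subst j.
    have -> : zero_at t i = 0.
      by apply/rowP => k; rewrite !mxE tu mxE; case: eqP => // /eqP ->.
    by rewrite hom0 -hom_omega // tu hom_unitv ler01.
  have -> : zero_at t i = t.
    apply/rowP => k; rewrite !mxE; case: eqP => // ->.
    by rewrite tu mxE eq_sym (negbTE ji).
  by rewrite hom_omega.
have hint : Omega_int n t.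
  split => // k; rewrite lt_neqAle omega_le1 // andbT.
  by apply/negP => /eqP e; move/existsP: hno; apply; exists k; rewrite e.
have ti1 : t ord0 i < 1 by case: hint => _; apply.
have ne : 1 - t ord0 i != 0 by rewrite subr_eq0 eq_sym lt_eqF.
have -> : zero_at t i = (1 - t ord0 i) *: drop_coord t i.
  apply/rowP => k; rewrite !mxE; case: eqP => _; first by rewrite mulr0.
  by field.
have hdrop : Omega n (drop_coord t i).
  case: ht => h1 h2; split.
    move=> k; rewrite mxE; case: eqP => // _.
    by rewrite divr_ge0 // subr_ge0 ltW.
  rewrite (bigD1 i) //= mxE eqxx add0r.
  rewrite (eq_bigr (fun k => t ord0 k / (1 - t ord0 i))); last first.
    by move=> k /negbTE hk; rewrite mxE hk.
  rewrite -mulr_suml.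
  move: h2; rewrite (bigD1 i) //= => h2.
  have -> : \sum_(k | k != i) t ord0 k = 1 - t ord0 i.
    by rewrite -h2 addrC addrK.
  by rewrite mulfV.
rewrite homZ; last by rewrite subr_ge0 ltW.
rewrite hom_omega //.
by case: Hpsi => _ [_ [_ hB2]]; apply: hB2.
Qed.

Lemma nonneg_zero_at x i : nonneg x -> nonneg (zero_at x i).
Proof. by move=> h j; rewrite mxE; case: eqP. Qed.

Lemma hom_zero x i : nonneg x -> hom (zero_at x i) <= hom x.
Proof.
move=> hx.
have [s0|s0] := eqVneq (ssum x) 0.
  by rewrite (ssum0_eq0 hx s0) (_ : zero_at 0 i = 0) // ; apply/rowP => j; rewrite !mxE; case: eqP.
have ge : 0 <= ssum x by apply: ssum_ge0.
have ex : x = ssum x *: ((ssum x)^-1 *: x) by rewrite scalerA mulfV ?scale1r.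
have ez : zero_at x i = ssum x *: zero_at ((ssum x)^-1 *: x) i.
  by apply/rowP => j; rewrite !mxE; case: eqP; rewrite ?mulr0 // => _; rewrite mulrA mulfV ?mul1r.
have -> : hom x = ssum x * hom ((ssum x)^-1 *: x) by rewrite {1}ex homZ.
rewrite ez homZ //; apply: ler_wpM2l => //.
rewrite [X in _ <= X]hom_omega; last exact: (omega_normalize hx s0).
exact: hom_zero_omega i (omega_normalize hx s0).
Qed.

Lemma hom_set x i u : nonneg x -> 0 <= u <= x ord0 i -> hom (set_at x i u) <= hom x.
Proof.
move=> hx /andP [u0 ux].
have [xi0|xi0] := eqVneq (x ord0 i) 0.
  have u00 : u = 0 by apply/eqP; rewrite eq_le u0 andbT -xi0.
  rewrite (_ : set_at x i u = x) //; apply/rowP => j; rewrite !mxE.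
  by case: eqP => // ->; rewrite u00 xi0.
have xp : 0 < x ord0 i by rewrite lt_def xi0 hx.
set l := u / x ord0 i.
have l0 : 0 <= l by rewrite divr_ge0.
have l1 : 0 <= 1 - l by rewrite subr_ge0 ler_pdivrMr // mul1r.
have -> : set_at x i u = l *: x + (1 - l) *: zero_at x i.
  apply/rowP => j; rewrite !mxE; case: eqP => [->|_]; rewrite /l.
    by rewrite mulr0 addr0 mulfVK.
  by ring.
apply: le_trans (homD (nonnegZ l0 hx) (nonnegZ l1 (nonneg_zero_at i hx))) _.
rewrite !homZ //.
have := hom_zero i hx => hz.
have : (1 - l) * hom (zero_at x i) <= (1 - l) * hom x by apply: ler_wpM2l.
by move=> h; apply: le_trans (lerD (lexx _) h) _; rewrite -mulrDl addrC subrK mul1r.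
Qed.

Lemma hom_mono x y : nonneg y -> (forall i, y ord0 i <= x ord0 i) -> hom y <= hom x.
Proof.
move=> hy hyx.
pose w k := \row_(j < n) (if (j < k)%N then y ord0 j else x ord0 j).
have wn : forall k, nonneg (w k).
  by move=> k j; rewrite mxE; case: ifP => _; [apply: hy | apply: le_trans (hy j) (hyx j)].
suff : forall k, hom (w k) <= hom x.
  move=> /(_ n); rewrite (_ : w n = y) //; apply/rowP => j; rewrite !mxE ltn_ord //.
elim => [|k IH].
  by rewrite (_ : w 0%N = x) //; apply/rowP => j; rewrite !mxE.
case: (ltnP k n) => kn.
  pose i := Ordinal kn.
  have -> : w k.+1 = set_at (w k) i (y ord0 i).
    apply/rowP => j; rewrite !mxE.
    have [->|nji] := eqVneq j i; first by rewrite /= ltnSn.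
    rewrite ltnS leq_eqVlt.
    suff -> : (nat_of_ord j == k) = false by [].
    by apply/negP => /eqP e; move/eqP: nji; apply; apply: val_inj.
  apply: le_trans IH; apply: hom_set => //.
  by rewrite hy /= mxE ltnn hyx.
rewrite (_ : w k.+1 = w k) //; apply/rowP => j; rewrite !mxE.
by rewrite (leq_trans (ltn_ord j) kn) (leq_trans (ltn_ord j) (leqW kn)).
Qed.

Lemma hom_ge_coord x i : nonneg x -> x ord0 i <= hom x.
Proof.
move=> hx; rewrite -[x ord0 i]mulr1 -(hom_unitv i) -homZ //.
apply: hom_mono; first by apply: nonnegZ => //; case: (omega_unitv i).
move=> j; rewrite !mxE; case: eqP => [->|_]; first by rewrite mulr1.
by rewrite mulr0.
Qed.

Lemma unitv_sum x : x = \sum_i x ord0 i *: (@unitv R n i).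
Proof.
apply/rowP => j; rewrite summxE (bigD1 j) //= !mxE eqxx mulr1 big1 ?addr0 //.
by move=> i hi; rewrite !mxE eq_sym (negbTE hi) mulr0.
Qed.

Lemma hom_le_sum x : nonneg x -> hom x <= ssum x.
Proof.
move=> hx; rewrite {1}(unitv_sum x) /ssum.
elim: (index_enum _) => [|a r IH]; first by rewrite !big_nil hom0.
rewrite !big_cons; apply: le_trans (homD _ _) _.
- by apply: nonnegZ => //; case: (omega_unitv a).
- elim: r {IH} => [|b r IHr]; first by rewrite big_nil => j; rewrite mxE.
  rewrite big_cons; apply: nonnegD => //.
  by apply: nonnegZ => //; case: (omega_unitv b).
rewrite homZ // hom_unitv mulr1; exact: lerD.
Qed.

Lemma psi_ge_coord t i : Omega n t -> t ord0 i <= psi t.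
Proof. by move=> ht; rewrite -hom_omega //; apply: hom_ge_coord; case: ht. Qed.

Lemma psi_le1 t : Omega n t -> psi t <= 1.
Proof. by move=> ht; rewrite -hom_omega // -(omega_ssum ht); apply: hom_le_sum; case: ht. Qed.

Lemma psi_ge_inv t : Omega n t -> 1 / n%:R <= psi t.
Proof.
move=> ht.
have n0 : (0 < n)%N.
  case: n t ht => // t [_]; rewrite big_ord0 => /eqP; rewrite eq_sym oner_eq0.
  by [].
rewrite ler_pdivrMr ?ltr0n // -[X in X <= _](omega_ssum ht) /ssum.
have -> : psi t * n%:R = \sum_(i < n) psi t by rewrite sumr_const card_ord mulr_natr.
apply: ler_sum => i _.
exact: psi_ge_coord.
Qed.

Lemma psi_gt0 t : Omega n t -> 0 < psi t.
Proof.
move=> ht; apply: lt_le_trans (psi_ge_inv ht).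
have n0 : (0 < n)%N.
  case: n t ht => // t [_]; rewrite big_ord0 => /eqP; rewrite eq_sym oner_eq0.
  by [].
by rewrite divr_gt0 ?ltr0n.
Qed.

End Hom.

Section HB.
Variable R : realType.
Variable n : nat.
Implicit Types x y u w : 'rV[R]_n.

Definition sublin (q : 'rV[R]_n -> R) :=
  (forall x y, q (x + y) <= q x + q y) /\ (forall c x, 0 <= c -> q (c *: x) = c * q x).
Definition linal (q : 'rV[R]_n -> R) u c := forall x mu, q (x + mu *: u) = q x + mu * c.
Definition red (q : 'rV[R]_n -> R) u c x := inf (range (fun l : R => q (x + l *: u) - l * c)).

Lemma sublin0 q : sublin q -> q 0 = 0.
Proof. by case=> _ h; rewrite -(scale0r 0) h ?lexx // mul0r. Qed.

Lemma sublin_opp q u : sublin q -> - q (- u) <= q u.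
Proof.
move=> hq; have := (proj1 hq) u (- u); rewrite subrr sublin0 // => h.
by rewrite lerNl -subr_ge0 opprK addrC.
Qed.

Lemma linal_val q u c : sublin q -> linal q u c -> c = q u.
Proof. by move=> hq hl; have := hl 0 1; rewrite add0r scale1r sublin0 // add0r mul1r. Qed.

Lemma inf_affine (f g h h' : R -> R) a k : 0 < a -> has_lbound (range g) ->
  (forall l, f l = a * g (h l) + k) -> (forall l, h (h' l) = l) ->
  inf (range f) = a * inf (range g) + k.
Proof.
move=> a0 hg hf hh.
have neg : range g !=set0 by exists (g 0); exists 0.
have nef : range f !=set0 by exists (f 0); exists 0.
have lbf : lbound (range f) (a * inf (range g) + k).
  move=> _ [l _ <-]; rewrite hf lerD2r ler_pM2l //.
  by apply: ge_inf => //; exists (h l).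
apply/eqP; rewrite eq_le; apply/andP; split; last exact: lb_le_inf.
rewrite -lerBlDr -ler_pdivrMl //.
apply: lb_le_inf => // _ [l _ <-].
rewrite ler_pdivrMl // lerBlDr.
have -> : a * g l + k = f (h' l) by rewrite hf hh.
by apply: ge_inf; [exists (a * inf (range g) + k) | exists (h' l)].
Qed.

Section Red.
Variables (q : 'rV[R]_n -> R) (u : 'rV[R]_n) (c : R).
Hypothesis hq : sublin q.
Hypothesis hc1 : - q (- u) <= c.
Hypothesis hc2 : c <= q u.

Lemma red_lb x : lbound (range (fun l : R => q (x + l *: u) - l * c)) (- q (- x)).
Proof.
move=> _ [l _ <-].
have h1 : q (l *: u) <= q (x + l *: u) + q (- x).
  by rewrite -{1}(addKr x (l *: u)) addrC; apply: (proj1 hq).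
have h2 : l * c <= q (l *: u).
  have [l0|l0] := leP 0 l.
    by rewrite (proj2 hq) //; apply: (ler_wpM2l l0).
  have -> : q (l *: u) = (- l) * q (- u).
    by rewrite -(proj2 hq) ?oppr_ge0 ?ltW //; congr q; rewrite scaleNr scalerN opprK.
  rewrite -mulrNN; apply: ler_wpM2l; first by rewrite oppr_ge0 ltW.
  by rewrite lerNl.
lra.
Qed.

Lemma red_has_lb x : has_lbound (range (fun l : R => q (x + l *: u) - l * c)).
Proof. by exists (- q (- x)); apply: red_lb. Qed.

Lemma red_le x : red q u c x <= q x.
Proof.
rewrite /red; have := ge_inf (red_has_lb x); apply.
by exists 0 => //; rewrite scale0r addr0 mul0r subr0.
Qed.

Lemma red_linal : linal (red q u c) u c.
Proof.
move=> x mu; rewrite /red.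
rewrite (@inf_affine _ (fun l => q (x + l *: u) - l * c) (fun l => mu + l) (fun l => l - mu) 1 (mu * c)).
- by rewrite mul1r.
- by [].
- exact: red_has_lb.
- move=> l; have -> : x + mu *: u + l *: u = x + (mu + l) *: u by rewrite -addrA -scalerDl.
  ring.
- by move=> l; rewrite addrC subrK.
Qed.

Lemma red_pres w d : linal q w d -> linal (red q u c) w d.
Proof.
move=> hw x mu; rewrite /red.
rewrite (@inf_affine _ (fun l => q (x + l *: u) - l * c) id id 1 (mu * d)).
- by rewrite mul1r.
- by [].
- exact: red_has_lb.
- move=> l; have -> : x + mu *: w + l *: u = x + l *: u + mu *: w.
    by rewrite -!addrA (addrC (mu *: w)).
  rewrite hw /=; ring.
- by [].
Qed.

Lemma red_sublin : sublin (red q u c).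
Proof.
split.
  move=> x y.
  rewrite -lerBlDr.
  change (red q u c (x + y) - red q u c y <= inf (range (fun l : R => q (x + l *: u) - l * c))).
  apply: lb_le_inf; first by exists (q (x + 0 *: u) - 0 * c); exists 0.
  move=> _ [l1 _ <-].
  rewrite lerBlDr -lerBlDl.
  change (red q u c (x + y) - (q (x + l1 *: u) - l1 * c) <= inf (range (fun l : R => q (y + l *: u) - l * c))).
  apply: lb_le_inf; first by exists (q (y + 0 *: u) - 0 * c); exists 0.
  move=> _ [l2 _ <-].
  rewrite lerBlDr.
  apply: le_trans (_ : q (x + y + (l1 + l2) *: u) - (l1 + l2) * c <= _).
    by apply: ge_inf; [exact: red_has_lb | exists (l1 + l2)].
  have := (proj1 hq) (x + l1 *: u) (y + l2 *: u).
  have -> : x + l1 *: u + (y + l2 *: u) = x + y + (l1 + l2) *: u.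
    by rewrite scalerDl; rewrite -!addrA; congr (_ + _); rewrite addrCA.
  lra.
move=> a x a0.
have [->|an0] := eqVneq a 0.
  rewrite scale0r mul0r /red.
  apply/eqP; rewrite eq_le; apply/andP; split.
    apply: ge_inf; first exact: red_has_lb.
    by exists 0 => //; rewrite scale0r addr0 mul0r subr0 sublin0.
  apply: lb_le_inf; first by exists (q (0 + 0 *: u) - 0 * c); exists 0.
  by move=> v hv; have := red_lb hv; rewrite oppr0 sublin0 // oppr0.
have ap : 0 < a by rewrite lt_def an0 a0.
rewrite /red.
rewrite (@inf_affine _ (fun l => q (x + l *: u) - l * c) (fun l => l / a) (fun l => a * l) a 0) //.
- by rewrite addr0.
- exact: red_has_lb.
- move=> l; rewrite addr0 mulrBr.
  rewrite -(proj2 hq) //.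
  rewrite scalerDr scalerA (mulrC a) mulfVK // mulrA (mulrC a) mulfVK //.
- by move=> l; rewrite mulrC mulrA mulVf ?mul1r.
Qed.

End Red.

Lemma iter_red k : (k <= n)%N -> forall q, sublin q -> exists Q,
  [/\ sublin Q, (forall x, Q x <= q x), (forall w d, linal q w d -> linal Q w d) &
      (forall i : 'I_n, (i < k)%N -> linal Q (@unitv R n i) (Q (@unitv R n i)))].
Proof.
elim: k => [|k IH] kn q hq.
  by exists q; split.
have [Q [hQ hQq hQp hQi]] := IH (ltnW kn) q hq.
pose i0 := Ordinal kn.
pose uu := @unitv R n i0.
have c1 : - Q (- uu) <= Q uu by apply: sublin_opp.
exists (red Q uu (Q uu)); split.
- exact: red_sublin.
- by move=> x; apply: le_trans (red_le hQ c1 (lexx _) x) (hQq x).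
- by move=> w d hw; apply: red_pres => //; apply: hQp.
move=> i; rewrite ltnS leq_eqVlt => /orP [/eqP ik|ik].
  have -> : i = i0 by apply: val_inj.
  rewrite -(linal_val (red_sublin hQ c1 (lexx _)) (red_linal hQ c1 (lexx _))).
  exact: red_linal.
have hl := red_pres hQ c1 (lexx _) (hQi i ik).
by rewrite -(linal_val (red_sublin hQ c1 (lexx _)) hl).
Qed.

Lemma lin_expand Q : sublin Q -> (forall i, linal Q (@unitv R n i) (Q (@unitv R n i))) ->
  forall x, Q x = \sum_i x ord0 i * Q (@unitv R n i).
Proof.
move=> hQ hl x; rewrite {1}(unitv_sum x).
elim: (index_enum _) => [|a r IH]; first by rewrite !big_nil sublin0.
by rewrite !big_cons addrC hl IH addrC.
Qed.

Lemma hahn_banach q (t0 : 'rV[R]_n) : sublin q -> exists a : 'I_n -> R,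
  (forall x, \sum_i x ord0 i * a i <= q x) /\ \sum_i t0 ord0 i * a i = q t0.
Proof.
move=> hq.
have c1 : - q (- t0) <= q t0 by apply: sublin_opp.
have hq1 := red_sublin hq c1 (lexx _).
have [Q [hQ hQq hQp hQi]] := iter_red (leqnn n) hq1.
exists (fun i => Q (@unitv R n i)); split.
  move=> x; rewrite -lin_expand //; last by move=> i; apply: hQi.
  by apply: le_trans (hQq x) (red_le hq c1 _ _).
rewrite -lin_expand //; last by move=> i; apply: hQi.
have hl := hQp _ _ (red_linal hq c1 (lexx _)).
by have := hl 0 1; rewrite add0r scale1r sublin0 // add0r mul1r.
Qed.

End HB.

Section Dual.
Variable R : realType.
Variable n : nat.
Implicit Types x y t s : 'rV[R]_n.

Lemma omega_n0 t : Omega n t -> (0 < n)%N.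
Proof. by case: n t => // t [_]; rewrite big_ord0 => /eqP; rewrite eq_sym oner_eq0. Qed.

Definition pos x := \row_j Num.max (x ord0 j) 0.

Lemma pos_nonneg x : nonneg (pos x).
Proof. by move=> j; rewrite mxE le_max lexx orbT. Qed.

Lemma pos_id x : nonneg x -> pos x = x.
Proof. by move=> h; apply/rowP => j; rewrite mxE; apply/max_idPl; apply: h. Qed.

Variable psi : 'rV[R]_n -> R.
Hypothesis Hpsi : PsiClass psi.

Definition qpsi x := hom psi (pos x).

Lemma qpsi_sublin : sublin qpsi.
Proof.
split.
  move=> x y; rewrite /qpsi.
  apply: le_trans (homD Hpsi (pos_nonneg x) (pos_nonneg y)).
  apply: (hom_mono Hpsi (pos_nonneg _)) => j; rewrite !mxE ge_max.
  apply/andP; split.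
    apply: lerD; rewrite le_max lexx //.
  by rewrite addr_ge0 // le_max lexx orbT.
move=> c x c0; rewrite /qpsi -homZ //; congr hom.
by apply/rowP => j; rewrite !mxE maxr_pMr // mulr0.
Qed.

Lemma dotv_ge0 t s : nonneg t -> nonneg s -> 0 <= dotv t s.
Proof. by move=> ht hs; apply: sumr_ge0 => i _; rewrite mulr_ge0. Qed.

Lemma dotv_le t s : Omega n t -> Omega n s -> dotv t s <= psi t.
Proof.
move=> ht [hs1 hs2]; rewrite /dotv.
apply: le_trans (_ : \sum_i psi t * s ord0 i <= _).
  by apply: ler_sum => i _; apply: ler_wpM2r => //; apply: psi_ge_coord.
by rewrite -mulr_sumr hs2 mulr1.
Qed.

Lemma dual_has_ub s : Omega n s -> has_ubound [set dotv t s / psi t | t in Omega n].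
Proof.
move=> hs; exists 1 => _ [t ht <-].
by rewrite ler_pdivrMr ?psi_gt0 // mul1r dotv_le.
Qed.

Lemma dual_ge t s : Omega n t -> Omega n s -> dotv t s / psi t <= dualfun psi s.
Proof.
move=> ht hs; apply: (ub_le_sup (dual_has_ub hs)).
by exists t.
Qed.

Lemma dual_le s c : Omega n s -> (forall t, Omega n t -> dotv t s / psi t <= c) ->
  dualfun psi s <= c.
Proof.
move=> hs h; apply: ge_sup.
  exists (dotv (@unitv R n (Ordinal (omega_n0 hs))) s / psi (@unitv R n (Ordinal (omega_n0 hs)))).
  by exists (@unitv R n (Ordinal (omega_n0 hs))) => //; apply: omega_unitv.
by move=> _ [t ht <-]; apply: h.
Qed.

Lemma dotv_unitv i s : dotv (@unitv R n i) s = s ord0 i.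
Proof.
rewrite /dotv (bigD1 i) //= mxE eqxx mul1r big1 ?addr0 // => j hj.
by rewrite mxE (negbTE hj) mul0r.
Qed.

Lemma dual_ge_coord s i : Omega n s -> s ord0 i <= dualfun psi s.
Proof.
move=> hs; have := dual_ge (omega_unitv R i) hs.
have -> : psi (@unitv R n i) = 1 by case: Hpsi => _ [_ [h _]]; apply: h.
by rewrite dotv_unitv divr1.
Qed.

Lemma dual_le1 s : Omega n s -> dualfun psi s <= 1.
Proof.
move=> hs; apply: dual_le => // t ht.
by rewrite ler_pdivrMr ?psi_gt0 // mul1r dotv_le.
Qed.

Lemma dual_ge_inv s : Omega n s -> 1 / n%:R <= dualfun psi s.
Proof.
move=> hs; have n0 := omega_n0 hs.
rewrite ler_pdivrMr ?ltr0n // -[X in X <= _](omega_ssum hs) /ssum.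
have -> : dualfun psi s * n%:R = \sum_(i < n) dualfun psi s by rewrite sumr_const card_ord mulr_natr.
by apply: ler_sum => i _; apply: dual_ge_coord.
Qed.

Lemma dual_gt0 s : Omega n s -> 0 < dualfun psi s.
Proof.
move=> hs; apply: lt_le_trans (dual_ge_inv hs).
by rewrite divr_gt0 ?ltr0n // (omega_n0 hs).
Qed.

Lemma support t0 : Omega n t0 -> exists s, Omega n s /\ psi t0 * dualfun psi s <= dotv t0 s.
Proof.
move=> ht0.
have [a [ha1 ha2]] := hahn_banach t0 qpsi_sublin.
have qt0 : qpsi t0 = psi t0 by rewrite /qpsi pos_id ?hom_omega //; case: ht0.
have a0 : forall i, 0 <= a i.
  move=> i; have := ha1 (- @unitv R n i).
  have -> : qpsi (- @unitv R n i) = 0.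
    rewrite /qpsi (_ : pos _ = 0) ?hom0 //; apply/rowP => j; rewrite !mxE.
    by apply/max_idPr; rewrite oppr_le0 ler0n.
  rewrite (bigD1 i) //= big1 ?addr0; last by move=> j hj; rewrite !mxE (negbTE hj) oppr0 mul0r.
  by rewrite !mxE eqxx mulN1r oppr_le0.
set A := \sum_i a i.
have pt0 := psi_gt0 Hpsi ht0.
have Age : psi t0 <= A.
  rewrite -qt0 -ha2; apply: ler_sum => i _.
  by rewrite ler_piMl // omega_le1.
have Ap : 0 < A by apply: lt_le_trans Age.
pose s := \row_i (a i / A).
have hs : Omega n s.
  split; first by move=> i; rewrite mxE divr_ge0 // ltW.
  rewrite (eq_bigr (fun i => a i / A)); last by move=> i _; rewrite mxE.
  by rewrite -mulr_suml mulfV // gt_eqF.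
have dots : forall t, dotv t s = (\sum_i t ord0 i * a i) / A.
  move=> t; rewrite /dotv mulr_suml; apply: eq_bigr => i _.
  by rewrite mxE mulrA.
exists s; split => //.
have hd : dualfun psi s <= 1 / A.
  apply: dual_le => // t ht.
  have h : \sum_i t ord0 i * a i <= psi t.
    by have := ha1 t; rewrite /qpsi pos_id ?hom_omega //; case: ht.
  have h2 : (\sum_i t ord0 i * a i) / A <= psi t / A.
    by apply: ler_wpM2r => //; rewrite invr_ge0 ltW.
  rewrite dots ler_pdivrMr ?psi_gt0 //; apply: le_trans h2 _.
  by rewrite mul1r mulrC.
rewrite dots ha2 qt0.
apply: le_trans (_ : psi t0 * (1 / A) <= _); first by apply: ler_wpM2l => //; apply: ltW.
by rewrite mul1r.
Qed.

End Dual.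

Section Compare.
Variable R : realType.
Variable n : nat.
Variables psi phi : 'rV[R]_n -> R.
Hypothesis Hpsi : PsiClass psi.
Hypothesis Hphi : PsiClass phi.

Lemma cmp_dual c : 0 < c -> (forall t, Omega n t -> c * phi t <= psi t) ->
  forall s, Omega n s -> c * dualfun psi s <= dualfun phi s.
Proof.
move=> c0 h s hs.
rewrite mulrC -ler_pdivlMr //.
apply: dual_le => // t ht.
have p1 := psi_gt0 Hpsi ht; have p2 := psi_gt0 Hphi ht.
apply: le_trans (_ : dotv t s / (c * phi t) <= _).
  apply: ler_wpM2l; first by apply: dotv_ge0; [case: ht | case: hs].
  by rewrite lef_pV2 ?posrE ?mulr_gt0 // h.
have -> : dotv t s / (c * phi t) = (dotv t s / phi t) / c.
  by field; rewrite !gt_eqF.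
apply: ler_wpM2r; first by rewrite invr_ge0 ltW.
exact: (dual_ge Hphi).
Qed.

Lemma cmp_dual_conv c : 0 < c -> (forall s, Omega n s -> c * dualfun psi s <= dualfun phi s) ->
  forall t, Omega n t -> c * phi t <= psi t.
Proof.
move=> c0 h t ht.
have [s [hs hsup]] := support Hphi ht.
have p1 := psi_gt0 Hpsi ht; have p2 := psi_gt0 Hphi ht.
have d1 := dual_gt0 Hpsi hs.
have g := dual_ge Hpsi ht hs.
(* psi* s >= dotv t s / psi t >= phi t * phi* s / psi t >= phi t * c * psi* s / psi t *)
have : phi t * (c * dualfun psi s) / psi t <= dualfun psi s.
  apply: le_trans g.
  apply: ler_wpM2r; first by rewrite invr_ge0 ltW.
  apply: le_trans hsup; apply: ler_wpM2l; [exact: ltW | exact: h].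
move=> H; rewrite ler_pdivrMr // in H.
have e1 : phi t * (c * dualfun psi s) = (c * phi t) * dualfun psi s by ring.
have e2 : dualfun psi s * psi t = psi t * dualfun psi s by ring.
rewrite e1 e2 in H.
by rewrite ler_pM2r in H.
Qed.

End Compare.

Section LinBound.
Variable R : realType.
Variable X : normedModType R.

Lemma lin_bound (g : X -> R) : (forall (a : R) x y, g (a *: x + y) = a * g x + g y) ->
  continuous g -> exists C, 0 <= C /\ forall y, `|g y| <= C * `|y|.
Proof.
move=> hl hc.
have g0 : g 0 = 0.
  have := hl 1 0 0; rewrite scaler0 addr0 mul1r => h; lra.
have gZ : forall a x, g (a *: x) = a * g x.
  by move=> a x; have := hl a x 0; rewrite addr0 g0 addr0.
have := @cvgr_dist_lt _ _ _ _ _ g (g 0) (hc 0) 1 ltr01.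
move=> H; have H' : \forall t \near (0:X), `|g 0 - g t| < 1.
  by apply: H; apply: nbhs_filter.
have [e e0 He] := (nbhs_normP _ _).1 H'.
exists (2 / e); split; first by rewrite divr_ge0 // ltW.
move=> y.
have [->|y0] := eqVneq y 0; first by rewrite g0 normr0 normr0 mulr0.
have ny : 0 < `|y| by rewrite normr_gt0.
pose k := e / (2 * `|y|).
have k0 : 0 < k by rewrite divr_gt0 // mulr_gt0.
have hz : `|g 0 - g (k *: y)| < 1.
  apply: He; rewrite /= sub0r normrN normrZ gtr0_norm // /k.
  have -> : e / (2 * `|y|) * `|y| = e / 2 by field; rewrite gt_eqF.
  by rewrite ltr_pdivrMr // ltr_pMr // ltr1n.
rewrite g0 sub0r normrN gZ normrM gtr0_norm // in hz.
have h1 : `|g y| <= k^-1.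
  by rewrite -(ler_pM2l k0) mulfV ?gt_eqF // ltW.
have -> : 2 / e * `|y| = k^-1 by rewrite /k; field; rewrite !gt_eqF.
exact: h1.
Qed.

End LinBound.

Section Ratio.
Variable R : realType.
Variable n : nat.
Variables F G : 'rV[R]_n -> R.

Lemma ratio_facts : (0 < n)%N ->
  (forall t, Omega n t -> 1 / n%:R <= F t /\ F t <= 1) ->
  (forall t, Omega n t -> 1 / n%:R <= G t /\ G t <= 1) ->
  let E := [set F t / G t | t in Omega n] in
  [/\ 1 / n%:R <= inf E, (forall t, Omega n t -> inf E <= F t / G t /\ F t / G t <= sup E)
    & sup E <= n%:R].
Proof.
move=> n0 hF hG E.
have ip : 0 < 1 / n%:R :> R by rewrite divr_gt0 ?ltr0n.
have rb : forall t, Omega n t -> 1 / n%:R <= F t / G t /\ F t / G t <= n%:R.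
  move=> t ht; have [f1 f2] := hF t ht; have [g1 g2] := hG t ht.
  have gp : 0 < G t by apply: lt_le_trans g1.
  split.
    rewrite ler_pdivlMr //; apply: le_trans f1.
    by rewrite ger_pMr.
  rewrite ler_pdivrMr //; apply: le_trans f2 _.
  by move: g1; rewrite ler_pdivrMr ?ltr0n // mulrC.
have ne : E !=set0.
  by exists (F (@unitv R n (Ordinal n0)) / G (@unitv R n (Ordinal n0))); exists (@unitv R n (Ordinal n0)) => //; apply: omega_unitv.
have lb : lbound E (1 / n%:R) by move=> _ [t ht <-]; case: (rb t ht).
have ub : ubound E n%:R by move=> _ [t ht <-]; case: (rb t ht).
split.
- exact: lb_le_inf.
- move=> t ht; split.
    by apply: ge_inf; [exists (1 / n%:R) | exists t].
  by apply: ub_le_sup; [exists n%:R | exists t].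
- exact: ge_sup.
Qed.

End Ratio.

Section Norms.
Variable R : realType.
Variable n : nat.
Variable X : normedModType R.
Implicit Types x y : 'I_n -> X.

Definition nsum x := \sum_i `|x i|.

Lemma nsum_ge0 x : 0 <= nsum x.
Proof. by apply: sumr_ge0 => i _. Qed.

Lemma psinorm_row_omega x : nsum x != 0 -> Omega n (\row_i (`|x i| / nsum x)).
Proof.
move=> h; split; first by move=> i; rewrite mxE divr_ge0 ?nsum_ge0.
rewrite (eq_bigr (fun i => `|x i| / nsum x)); last by move=> i _; rewrite mxE.
by rewrite -mulr_suml mulfV.
Qed.

Lemma psinorm_eq (psi : 'rV[R]_n -> R) x : nsum x != 0 ->
  psinorm psi x = nsum x * psi (\row_i (`|x i| / nsum x)).
Proof. by move=> h; rewrite /psinorm /= -/(nsum x) (negbTE h). Qed.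

Lemma psinorm_eq0 (psi : 'rV[R]_n -> R) x : nsum x = 0 -> psinorm psi x = 0.
Proof. by move=> h; rewrite /psinorm /= -/(nsum x) h eqxx. Qed.

Lemma psinorm_cmp (psi phi : 'rV[R]_n -> R) k : (forall t, Omega n t -> k * phi t <= psi t) ->
  forall x, k * psinorm phi x <= psinorm psi x.
Proof.
move=> h x; have [s0|s0] := eqVneq (nsum x) 0.
  by rewrite !psinorm_eq0 // mulr0.
rewrite !psinorm_eq // mulrCA; apply: ler_wpM2l; first exact: nsum_ge0.
exact/h/psinorm_row_omega.
Qed.

Lemma psinorm_cmp2 (psi phi : 'rV[R]_n -> R) k : (forall t, Omega n t -> psi t <= k * phi t) ->
  forall x, psinorm psi x <= k * psinorm phi x.
Proof.
move=> h x; have [s0|s0] := eqVneq (nsum x) 0.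
  by rewrite !psinorm_eq0 // mulr0.
rewrite !psinorm_eq // mulrCA; apply: ler_wpM2l; first exact: nsum_ge0.
exact/h/psinorm_row_omega.
Qed.

Lemma nsumZ x (c : R) : 0 < c -> nsum (fun i => c *: x i) = c * nsum x.
Proof.
move=> c0; rewrite /nsum mulr_sumr; apply: eq_bigr => i _.
by rewrite normrZ gtr0_norm.
Qed.

Lemma psinormZ (psi : 'rV[R]_n -> R) x (c : R) : 0 < c ->
  psinorm psi (fun i => c *: x i) = c * psinorm psi x.
Proof.
move=> c0; have [s0|s0] := eqVneq (nsum x) 0.
  by rewrite !psinorm_eq0 ?mulr0 // nsumZ // s0 mulr0.
have s1 : nsum (fun i => c *: x i) != 0 by rewrite nsumZ //; apply: mulf_neq0 => //; rewrite gt_eqF.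
rewrite (psinorm_eq _ s1) (psinorm_eq _ s0) nsumZ // -mulrA.
congr (_ * (_ * psi _)).
apply/rowP => j; rewrite !mxE normrZ gtr0_norm //.
by field; rewrite s0 gt_eqF.
Qed.

Lemma psinorm_ge (psi : 'rV[R]_n -> R) x : PsiClass psi ->
  nsum x * (1 / n%:R) <= psinorm psi x.
Proof.
move=> hp; have [s0|s0] := eqVneq (nsum x) 0.
  by rewrite psinorm_eq0 // s0 mul0r.
rewrite psinorm_eq //; apply: ler_wpM2l; first exact: nsum_ge0.
exact/(psi_ge_inv hp)/psinorm_row_omega.
Qed.

Lemma cl_lin (f : 'I_n -> X -> R) : cont_lin_family f ->
  forall i (a : R) (y : X), f i (a *: y) = a * f i y.
Proof.
move=> hf i a y; have [hl _] := hf i.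
have g0 : f i 0 = 0.
  have := hl 1 0 0; rewrite scaler0 addr0 mul1r => h; lra.
by have := hl a y 0; rewrite addr0 g0 addr0.
Qed.

Lemma dual_bounded (psi : 'rV[R]_n -> R) (f : 'I_n -> X -> R) : PsiClass psi -> (0 < n)%N ->
  cont_lin_family f ->
  has_ubound [set `|\sum_i f i (x i)| | x in [set x : 'I_n -> X | psinorm psi x <= 1]].
Proof.
move=> hp n0 hf.
have hC0 : forall i, exists C : R, 0 <= C /\ forall y : X, `|f i y| <= C * `|y|.
  by move=> i; have [hl hc] := hf i; exact: lin_bound.
have [C hC] := fin_all_exists hC0.
exists ((\sum_i C i) * n%:R) => _ [x hx <-].
have hS : nsum x <= n%:R.
  have := le_trans (psinorm_ge x hp) hx.
  by rewrite mul1r ler_pdivrMr ?ltr0n // mul1r.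
apply: le_trans (ler_norm_sum _ _ _) _.
apply: le_trans (_ : \sum_i C i * nsum x <= _).
  apply: ler_sum => i _; apply: le_trans (proj2 (hC i) (x i)) _.
  apply: ler_wpM2l; first by case: (hC i).
  by rewrite /nsum (bigD1 i) //= lerDl sumr_ge0.
rewrite -mulr_suml; apply: ler_wpM2l => //.
by apply: sumr_ge0 => i _; case: (hC i).
Qed.

Lemma dualnorm_cmp (psi phi : 'rV[R]_n -> R) (k : R) (f : 'I_n -> X -> R) :
  PsiClass phi -> (0 < n)%N -> 0 < k -> cont_lin_family f ->
  (forall x, k * psinorm phi x <= psinorm psi x) ->
  dualnorm psi f <= (1 / k) * dualnorm phi f.
Proof.
move=> hp n0 k0 hf h.
apply: ge_sup.
  exists (`|\sum_i f i ((fun _ => 0 : X) i)|); exists (fun _ => 0) => //=.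
  by rewrite psinorm_eq0 // /nsum big1 // => i _; rewrite normr0.
move=> _ [x hx <-].
have hy : psinorm phi (fun i => k *: x i) <= 1.
  by rewrite psinormZ //; apply: le_trans (h x) hx.
have := ub_le_sup (dual_bounded hp n0 hf) (ex_intro2 _ _ (fun i => k *: x i) hy erefl).
rewrite (eq_bigr (fun i => k * f i (x i))); last by move=> i _; rewrite (cl_lin hf).
rewrite -mulr_sumr normrM gtr0_norm // => H.
rewrite mul1r mulrC ler_pdivlMr // mulrC; exact: H.
Qed.

End Norms.

Section Helpers.
Variable R : realType.

Lemma ratio_le_inv (a b c : R) : 0 < b -> 0 < c -> c * a <= b -> a / b <= 1 / c.
Proof.
move=> b0 c0 h; rewrite ler_pdivrMr // mul1r mulrC ler_pdivlMr //.
by rewrite mulrC.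
Qed.

Lemma inv_le_ratio (a b c : R) : 0 < b -> 0 < c -> a / b <= c -> 1 / c * a <= b.
Proof.
move=> b0 c0; rewrite ler_pdivrMr // => h.
by rewrite mul1r mulrC ler_pdivrMr // mulrC.
Qed.

Lemma prod_one (m M : R) : 0 < m -> 0 < M -> M <= 1 / m -> 1 / M <= m -> m * M = 1.
Proof.
move=> m0 M0 h1 h2.
rewrite ler_pdivlMr // mulrC in h1.
rewrite ler_pdivrMr // in h2.
by apply/eqP; rewrite eq_le h1 h2.
Qed.

Lemma inv_mul_le (a b M : R) : 0 < M -> a <= M * b -> 1 / M * a <= b.
Proof. by move=> M0 h; rewrite mul1r mulrC ler_pdivrMr // mulrC. Qed.

End Helpers.

Lemma ratio_ne (R : realType) (n : nat) (F G : 'rV[R]_n -> R) : (0 < n)%N ->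
  [set F t / G t | t in Omega n] !=set0.
Proof.
move=> n0; exists (F (@unitv R n (Ordinal n0)) / G (@unitv R n (Ordinal n0))).
by exists (@unitv R n (Ordinal n0)) => //; apply: omega_unitv.
Qed.

Theorem proposition3p5 (R : realType) (n : nat) (X : normedModType R)
  (psi phi : 'rV[R]_n -> R) :
  (2 <= n)%N -> PsiClass psi -> PsiClass phi ->
  let m := ratio_min psi phi in
  let M := ratio_max psi phi in
  let ms := ratio_min (dualfun psi) (dualfun phi) in
  let Ms := ratio_max (dualfun psi) (dualfun phi) in
  (* (i) *)
  (1 / n%:R <= m /\
   (forall t, Omega n t -> m <= psi t / phi t /\ psi t / phi t <= M) /\
   M <= n%:R) /\
  (* (ii) *)
  (1 / n%:R <= ms /\
   (forall t, Omega n t -> ms <= dualfun psi t / dualfun phi t /\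
                         dualfun psi t / dualfun phi t <= Ms) /\
   Ms <= n%:R) /\
  (* (iii) *)
  (m * Ms = 1 /\ M * ms = 1) /\
  (* (iv) *)
  (forall x : 'I_n -> X,
     m * psinorm phi x <= psinorm psi x /\ psinorm psi x <= M * psinorm phi x) /\
  (* (v) *)
  (forall f : 'I_n -> X -> R, cont_lin_family f ->
     (1 / M) * dualnorm phi f <= dualnorm psi f /\
     dualnorm psi f <= (1 / m) * dualnorm phi f) /\
  (* (vi) *)
  ((forall t, Omega n t -> phi t <= psi t) <->
   (forall s, Omega n s -> dualfun psi s <= dualfun phi s)) /\
  (* (vii) *)
  ((forall t, Omega n t -> psi t <= phi t) <->
   (forall s, Omega n s -> dualfun phi s <= dualfun psi s)).
Proof.
move=> n2 Hpsi Hphi m M ms Ms.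
have n0 : (0 < n)%N by apply: leq_trans n2.
have ip : 0 < 1 / n%:R :> R by rewrite divr_gt0 ?ltr0n.
have bpsi : forall t, Omega n t -> 1 / n%:R <= psi t /\ psi t <= 1.
  by move=> t ht; split; [apply: psi_ge_inv | apply: psi_le1].
have bphi : forall t, Omega n t -> 1 / n%:R <= phi t /\ phi t <= 1.
  by move=> t ht; split; [apply: psi_ge_inv | apply: psi_le1].
have dpsi : forall t, Omega n t -> 1 / n%:R <= dualfun psi t /\ dualfun psi t <= 1.
  by move=> t ht; split; [apply: dual_ge_inv | apply: dual_le1].
have dphi : forall t, Omega n t -> 1 / n%:R <= dualfun phi t /\ dualfun phi t <= 1.
  by move=> t ht; split; [apply: dual_ge_inv | apply: dual_le1].
have [m1 mr Mn] := ratio_facts n0 bpsi bphi.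
have [ms1 msr Msn] := ratio_facts n0 dpsi dphi.
rewrite -/(ratio_min psi phi) -/(ratio_max psi phi) -/m -/M in m1 mr Mn.
rewrite -/(ratio_min (dualfun psi) (dualfun phi)) -/(ratio_max (dualfun psi) (dualfun phi)) -/ms -/Ms in ms1 msr Msn.
have m0 : 0 < m by apply: lt_le_trans m1.
have ms0 : 0 < ms by apply: lt_le_trans ms1.
have M0 : 0 < M.
  have [t1 t2] := mr _ (omega_unitv R (Ordinal n0)); apply: lt_le_trans t2.
  by apply: lt_le_trans m0 t1.
have Ms0 : 0 < Ms.
  have [t1 t2] := msr _ (omega_unitv R (Ordinal n0)); apply: lt_le_trans t2.
  by apply: lt_le_trans ms0 t1.
have php := psi_gt0 Hphi; have psp := psi_gt0 Hpsi.
have dphp := dual_gt0 Hphi; have dpsp := dual_gt0 Hpsi.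
have hA : forall t, Omega n t -> m * phi t <= psi t.
  by move=> t ht; rewrite -ler_pdivlMr ?php //; case: (mr t ht).
have hA' : forall t, Omega n t -> 1 / M * psi t <= phi t.
  by move=> t ht; apply: inv_le_ratio => //; [exact: php | case: (mr t ht)].
have hA2 : forall t, Omega n t -> psi t <= M * phi t.
  by move=> t ht; rewrite -ler_pdivrMr ?php //; case: (mr t ht).
split; first by [].
split; first by [].
split.
  split.
    apply: prod_one => //.
      apply: ge_sup; first exact: ratio_ne.
      move=> _ [s hs <-]; apply: ratio_le_inv => //; first exact: dphp.
      exact: (cmp_dual Hpsi Hphi m0 hA).
    have hC : forall s, Omega n s -> 1 / Ms * dualfun psi s <= dualfun phi s.
      by move=> s hs; apply: inv_le_ratio => //; [exact: dphp | case: (msr s hs)].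
    have hD := cmp_dual_conv Hpsi Hphi (divr_gt0 ltr01 Ms0) hC.
    apply: lb_le_inf; first exact: ratio_ne.
    by move=> _ [t ht <-]; rewrite ler_pdivlMr ?php //; apply: hD.
  rewrite mulrC; apply: prod_one => //.
    apply: ge_sup; first exact: ratio_ne.
    move=> _ [t ht <-]; apply: ratio_le_inv => //; first exact: php.
    apply: (cmp_dual_conv Hphi Hpsi ms0) => // s hs.
    by rewrite -ler_pdivlMr ?dphp //; case: (msr s hs).
  apply: lb_le_inf; first exact: ratio_ne.
  move=> _ [s hs <-]; rewrite ler_pdivlMr ?dphp //.
  exact: (cmp_dual Hphi Hpsi (divr_gt0 ltr01 M0) hA').
split.
  by move=> x; split; [apply: psinorm_cmp | apply: psinorm_cmp2].
split.
  move=> f hf; split.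
    apply: inv_mul_le => //.
    have := dualnorm_cmp Hpsi n0 (divr_gt0 ltr01 M0) hf (psinorm_cmp hA').
    by rewrite !div1r invrK.
  exact: dualnorm_cmp Hphi n0 m0 hf (psinorm_cmp hA).
split.
  split.
    move=> h s hs; rewrite -[dualfun psi s]mul1r.
    by apply: (cmp_dual Hpsi Hphi ltr01) => // t ht; rewrite mul1r h.
  move=> h t ht; rewrite -[phi t]mul1r.
  by apply: (cmp_dual_conv Hpsi Hphi ltr01) => // s hs; rewrite mul1r h.
split.
  move=> h s hs; rewrite -[dualfun phi s]mul1r.
  by apply: (cmp_dual Hphi Hpsi ltr01) => // t ht; rewrite mul1r h.
move=> h t ht; rewrite -[psi t]mul1r.
by apply: (cmp_dual_conv Hphi Hpsi ltr01) => // s hs; rewrite mul1r h.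
Qed.
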